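(* Consider the following disjunctive hierarchical secret sharing scheme. Setting. Let $n,m$ be positive integers and let the participant set $\mathcal{P}=\{1,\dots,n\}$ be partitioned into $m$ disjoint nonempty blocks $\mathcal{P}_1,\dots,\mathcal{P}_m$ of consecutive indices: with $n_\ell=|\mathcal{P}_\ell|$, $N_0=0$, $N_\ell=\sum_{w=1}^{\ell}n_w$, we have $\mathcal{P}_\ell=\{N_{\ell-1}+1,\dots,N_\ell\}$, so that $\mathcal{P}_1\cup\dots\cup\mathcal{P}_\ell=[N_\ell]:=\{1,\dots,N_\ell\}$. Let $t_1,\dots,t_m$ be integers with $1\le t_1<t_2<\dots<t_m$ and $t_\ell\le N_\ell$ for all $\ell\in[m]$. Public parameters. A prime $m_0$ and integers $m_1,\dots,m_n$ such that $\gcd(m_i,m_j)=1$ for all $0\le i<j\le n$, $m_0<m_1<\dots<m_n$, and, for some real numbers $k\ge 1$ and $\theta\in(0,1)$, $km_0<m_i<km_0+m_0^{\theta}$ for all $i\in[n]$. Participant $i$ is assigned modulus $m_i$. Also $m$ publicly known distinct functions $h_1,\dots,h_m$, where for each $i\in[n]$ and $\ell\in[m]$, $h_\ell(x,\ell)\in\mathbb{Z}_{m_i}$ for $x\in\mathbb{Z}_{m_i}$. Share generation. For a secret $s\in\mathbb{Z}_{m_0}=\{0,\dots,m_0-1\}$, the dealer chooses integers $c_i\in\mathbb{Z}_{m_i}$ for $i\in[N_{m-1}]$ and integers $\alpha_\ell$ ($\ell\in[m]$) such that $0\le y_\ell:=s+\alpha_\ell m_0<\prod_{i=1}^{t_\ell}m_i$.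 Participant $i$ receives the share $s_i=c_i$ if $i\in[N_{m-1}]$ and $s_i=y_m \bmod m_i$ if $i\in\{N_{m-1}+1,\dots,N_m\}$. For every $i\in[N_{m-1}]$, letting $\ell_1$ be the index with $i\in\mathcal{P}_{\ell_1}$, the dealer publishes $w_i^{(\ell)}=(y_\ell-h_\ell(s_i,\ell))\bmod m_i$ for every $\ell\in\{\ell_1,\dots,m\}$. Reconstruction. Given $\mathcal{A}\subseteq\mathcal{P}$ and $\ell\in[m]$ with $\mathcal{A}^{(\ell)}:=\mathcal{A}\cap[N_\ell]$ satisfying $|\mathcal{A}^{(\ell)}|\ge t_\ell$, the participants compute, for $i\in\mathcal{A}^{(\ell)}$, $s_i^{(\ell)}=h_\ell(s_i,\ell)+w_i^{(\ell)}$ if $\ell\le m-1$, or if $\ell=m$ and $i\le N_{m-1}$; and $s_i^{(m)}=s_i$ if $\ell=m$ and $i\in\{N_{m-1}+1,\dots,N_m\}$. They then compute $Y=\left(\sum_{i\in\mathcal{A}^{(\ell)}}\lambda_{i}M_{i}s_i^{(\ell)}\right)\bmod M$, the least nonnegative residue, where $M=\prod_{i\in\mathcal{A}^{(\ell)}}m_i$, $M_i=M/m_i$, $\lambda_i\equiv M_i^{-1}\pmod{m_i}$, and output $Y\bmod m_0$. Claim. For every secret $s\in\mathbb{Z}_{m_0}$, every admissible choice of the $c_i$ and $\alpha_\ell$, and every subset $\mathcal{A}$ in the access structure $\Gamma=\{\mathcal{A}\subseteq\mathcal{P}:\exists\,\ell\in[m]\text{ with }|\mathcal{A}\cap(\bigcup_{w=1}^{\ell}\mathcal{P}_w)|\ge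 t_\ell\}$, taking any $\ell$ with $|\mathcal{A}\cap[N_\ell]|\ge t_\ell$, the reconstruction procedure yields $Y=y_\ell$ and outputs $Y\bmod m_0=s$.
   Context: $\mathbb{Z}_{q}$ denotes $\{0,1,\dots,q-1\}$ and $x\bmod q$ denotes the least nonnegative residue. $[n]=\{1,\dots,n\}$. The functions $h_\ell$ are intended to be one-way functions, but no property of them is needed beyond being fixed public maps. *)

(* Defs.v *)
From Stdlib Require Import Reals.
From mathcomp Require Import all_boot all_order all_algebra.
Set Implicit Arguments. Unset Strict Implicit. Unset Printing Implicit Defensive.
Import Order.TTheory GRing.Theory Num.Theory.

Definition Nsum (nb : nat -> nat) (l : nat) : nat := (\sum_(1 <= w < l.+1) nb w)%N.

Local Open Scope ring_scope.

Definition yval (m0 : nat) (s : int) (alpha : nat -> int) (l : nat) : int :=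
  s + alpha l * m0%:Z.

Definition share (nb : nat -> nat) (m : nat) (mm : nat -> nat)
  (c : nat -> int) (y : nat -> int) (i : nat) : int :=
  if (i <= Nsum nb m.-1)%N then c i else (y m %% (mm i)%:Z)%Z.

(* published value w_i^(l) = (y_l - h_l(s_i, l)) mod m_i ;
   h l x stands for h_l(x, l) *)
Definition pubw (h : nat -> int -> int) (mm : nat -> nat) (y : nat -> int)
  (sh : nat -> int) (i l : nat) : int :=
  ((y l - h l (sh i)) %% (mm i)%:Z)%Z.

Definition Aset (A : pred nat) (nb : nat -> nat) (l : nat) : seq nat :=
  [seq i <- iota 1 (Nsum nb l) | A i].

Definition recon_share (nb : nat -> nat) (m : nat) (h : nat -> int -> int)
  (mm : nat -> nat) (y : nat -> int) (sh : nat -> int) (l i : nat) : int :=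
  if (l <= m.-1)%N || (i <= Nsum nb m.-1)%N
  then h l (sh i) + pubw h mm y sh i l
  else sh i.

Definition Mprod (A : pred nat) (nb : nat -> nat) (mm : nat -> nat) (l : nat) : nat :=
  (\prod_(i <- Aset A nb l) mm i)%N.

Definition Yrec (A : pred nat) (nb : nat -> nat) (m : nat) (h : nat -> int -> int)
  (mm : nat -> nat) (y : nat -> int) (sh : nat -> int) (lam : nat -> int) (l : nat) : int :=
  ((\sum_(i <- Aset A nb l)
      lam i * ((Mprod A nb mm l %/ mm i)%N)%:Z * recon_share nb m h mm y sh l i)
    %% (Mprod A nb mm l)%:Z)%Z.

(* Main.v *)
Require Import Defs.
From Stdlib Require Import Reals.
From mathcomp Require Import all_boot all_order all_algebra.
From mathcomp Require Import ring.
Import Order.TTheory GRing.Theory Num.Theory.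
Local Open Scope ring_scope.

Lemma crt_prod (mm : nat -> nat) (L : seq nat) (z : int) :
  uniq L ->
  (forall i j, i \in L -> j \in L -> i != j -> coprime (mm i) (mm j)) ->
  (forall i, i \in L -> ((mm i)%:Z %| z)%Z) ->
  ((\prod_(i <- L) mm i)%N%:Z %| z)%Z.
Proof.
elim: L => [|a L IH] /= uL cop dv; first by rewrite big_nil dvd1z.
case/andP: uL => aL uL.
rewrite big_cons PoszM Gauss_dvdz.
  rewrite dv ?mem_head //= IH // => [i j iL jL|i iL]; last by apply: dv; rewrite inE iL orbT.
  by apply: cop; rewrite inE ?iL ?jL orbT.
rewrite coprimezE /=.
have: forall i, i \in L -> coprime (mm a) (mm i).
  move=> i iL; apply: cop; rewrite ?inE ?eqxx ?iL ?orbT //.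
  by apply/eqP=> ai; rewrite ai iL in aL.
elim: (L) => [|b L' IH'] H; first by rewrite big_nil coprimen1.
rewrite big_cons coprimeMr H ?mem_head //= IH' // => i iL.
by apply: H; rewrite inE iL orbT.
Qed.

Lemma prod_ge (mm : nat -> nat) (n : nat) (L : seq nat) (a t : nat) :
  (forall i j, (i <= j <= n)%N -> (mm i <= mm j)%N) ->
  (forall i, (i <= n)%N -> (0 < mm i)%N) ->
  sorted ltn L -> (forall i, i \in L -> (a <= i <= n)%N) ->
  (t <= size L)%N ->
  (\prod_(a <= i < a + t) mm i <= \prod_(i <- L) mm i)%N.
Proof.
move=> mono pos.
have posL : forall L, (forall i, i \in L -> (i <= n)%N) -> (0 < \prod_(i <- L) mm i)%N.
  move=> L0 H; rewrite big_seq_cond; apply: prodn_cond_gt0 => i /andP [/H ? _]; exact: pos.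
elim: L a t => [|x L IH] a t /= srt bnd sz.
  move: sz; rewrite /= leqn0; move/eqP->; rewrite addn0 big_geq //. 
  by rewrite big_nil.
case: t sz => [|t] sz.
  rewrite addn0 big_geq //; apply: posL => i iL.
  by case/andP: (bnd i iL).
rewrite addnS big_ltn ?ltnS ?leq_addr // big_cons.
have [ax xn] := andP (bnd x (mem_head _ _)).
apply: leq_mul; first by apply: mono; rewrite ax xn.
rewrite -addSn; apply: IH => //.
- exact: path_sorted srt.
- move=> i iL; have [_ ->] := andP (bnd i (mem_behead (s:=x::L) iL)).
  rewrite andbT; apply: leq_ltn_trans ax _.
  have := order_path_min ltn_trans srt => /allP /(_ i iL); done.
Qed.

Lemma dvd_mod_sub (d x : int) : (d %| (x %% d)%Z - x)%Z.
Proof. by rewrite -eqz_mod_dvd modz_mod. Qed.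

Lemma Mi_dvd (mm : nat -> nat) (L : seq nat) i j :
  uniq L -> i \in L -> j \in L -> i != j -> (0 < mm j)%N ->
  (mm i %| (\prod_(k <- L) mm k) %/ mm j)%N.
Proof.
move=> uL iL jL ij pj.
rewrite (big_rem j jL) /= mulKn //.
have iR : i \in rem j L by rewrite (mem_rem_uniq j uL) inE ij iL.
by rewrite (big_rem i iR) /= dvdn_mulr.
Qed.

Theorem mainTheorem1
  (n m : nat) (nb : nat -> nat) (t : nat -> nat)
  (mm : nat -> nat) (k theta : R) (h : nat -> int -> int)
  (s : int) (c : nat -> int) (alpha : nat -> int)
  (A : pred nat) (l : nat) (lam : nat -> int) :
  (* setting *)
  (0 < n)%N -> (0 < m)%N ->
  (forall w, (1 <= w <= m)%N -> (0 < nb w)%N) ->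
  Nsum nb m = n ->
  (1 <= t 1)%N ->
  (forall w, (1 <= w < m)%N -> (t w < t w.+1)%N) ->
  (forall w, (1 <= w <= m)%N -> (t w <= Nsum nb w)%N) ->
  (* public parameters *)
  prime (mm 0%N) ->
  (forall i j, (i < j <= n)%N -> coprime (mm i) (mm j)) ->
  (forall i, (i < n)%N -> (mm i < mm i.+1)%N) ->
  Rle 1 k -> Rlt 0 theta -> Rlt theta 1 ->
  (forall i, (1 <= i <= n)%N ->
     Rlt (Rmult k (INR (mm 0%N))) (INR (mm i)) /\
     Rlt (INR (mm i)) (Rplus (Rmult k (INR (mm 0%N))) (Rpower (INR (mm 0%N)) theta))) ->
  (forall l1 l2, (1 <= l1 <= m)%N -> (1 <= l2 <= m)%N -> l1 <> l2 -> h l1 <> h l2) ->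
  (forall i l', (1 <= i <= n)%N -> (1 <= l' <= m)%N -> forall x : int,
     0 <= x < (mm i)%:Z -> 0 <= h l' x < (mm i)%:Z) ->
  (* share generation *)
  0 <= s < (mm 0%N)%:Z ->
  (forall i, (1 <= i <= Nsum nb m.-1)%N -> 0 <= c i < (mm i)%:Z) ->
  (forall l', (1 <= l' <= m)%N ->
     0 <= yval (mm 0%N) s alpha l' /\
     yval (mm 0%N) s alpha l' < (\prod_(1 <= i < (t l').+1) mm i)%:Z) ->
  (* reconstruction by A using level l *)
  (forall i, A i -> (1 <= i <= n)%N) ->
  (1 <= l <= m)%N ->
  (t l <= size (Aset A nb l))%N ->
  (forall i, i \in Aset A nb l ->
     (lam i * ((Mprod A nb mm l %/ mm i)%N)%:Z = 1 %[mod (mm i)%:Z])%Z) ->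
  let y := yval (mm 0%N) s alpha in
  let Y := Yrec A nb m h mm y (share nb m mm c y) lam l in
  Y = y l /\ (Y %% (mm 0%N)%:Z)%Z = s.

Proof.
move=> n0 m0 nbpos Nn t1 tinc tN pr cop mono k1 th0 th1 bnds hdist hrange
  srange crange yrange Ain lrange tsz lamH y Y.
set L := Aset A nb l.
have mon : forall i j, (i <= j <= n)%N -> (mm i <= mm j)%N.
  move=> i j /andP [ij jn]; elim: j ij jn => [|j IH] ij jn.
    by move: ij; rewrite leqn0 => /eqP ->.
  case: (ltngtP i j.+1) ij => // [ij|<-] _ //.
  apply: leq_trans (IH ij (ltnW jn)) _; apply: ltnW; exact: mono.
have pos : forall i, (i <= n)%N -> (0 < mm i)%N.
  move=> i iN; apply: leq_trans (mon 0%N i iN); apply: ltnW; exact: prime_gt1.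
have Lin : forall i, i \in L -> [/\ A i, (1 <= i)%N & (i <= n)%N].
  move=> i; rewrite mem_filter => /andP [Ai _].
  by have /andP [? ?] := Ain i Ai.
have uL : uniq L by rewrite filter_uniq // iota_uniq.
have sL : sorted ltn L by apply: sorted_filter; [exact: ltn_trans | exact: iota_ltn_sorted].
have copL : forall i j, i \in L -> j \in L -> i != j -> coprime (mm i) (mm j).
  move=> i j iL jL ij; have [_ _ iN] := Lin i iL; have [_ _ jN] := Lin j jL.
  case: (ltngtP i j) ij => // [lt|lt] _.
    by apply: cop; rewrite lt jN.
  by rewrite coprime_sym; apply: cop; rewrite lt iN.
have MP : Mprod A nb mm l = (\prod_(i <- L) mm i)%N by [].
have Mpos : (0 < \prod_(i <- L) mm i)%N.
  rewrite big_seq_cond; apply: prodn_cond_gt0 => i /andP [iL _].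
  by have [_ _ iN] := Lin i iL; exact: pos.
have l1 : (1 <= l <= m)%N := lrange.
have [y0 yM] := yrange l l1.
have ylt : y l < (\prod_(i <- L) mm i)%N%:Z.
  apply: lt_le_trans yM _; rewrite lez_nat -add1n.
  apply: (prod_ge _ n) => // i iL.
  by have [_ -> ->] := Lin i iL.
pose S := \sum_(i <- L) lam i * ((Mprod A nb mm l %/ mm i)%N)%:Z * recon_share nb m h mm y (share nb m mm c y) l i.
have key : forall i, i \in L -> ((mm i)%:Z %| S - y l)%Z.
  move=> i iL; have [_ i1 iN] := Lin i iL.
  rewrite /S (big_rem i iL) /=.
  set r := recon_share _ _ _ _ _ _ _ _.
  set rest := \sum_(j <- rem i L) _.
  have -> : lam i * ((Mprod A nb mm l %/ mm i)%N)%:Z * r + rest - y l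
    = (lam i * ((Mprod A nb mm l %/ mm i)%N)%:Z - 1) * r + (r - y l) + rest.
    by ring.
  apply: rpredD; first apply: rpredD.
  - apply: dvdz_mulr; rewrite -eqz_mod_dvd; apply/eqP; exact: lamH.
  - rewrite /r /recon_share /pubw; case: ifP => [_|].
      have -> : h l (share nb m mm c y i) +
         ((y l - h l (share nb m mm c y i)) %% (mm i)%:Z)%Z - y l
         = ((y l - h l (share nb m mm c y i)) %% (mm i)%:Z)%Z
           - (y l - h l (share nb m mm c y i)) by ring.
      exact: dvd_mod_sub.
    move/negbT; rewrite negb_or -!ltnNge => /andP [lm iNm].
    have -> : l = m.
      apply/eqP; rewrite eqn_leq; case/andP: l1 => _ ->; move: lm.
      by case: (m) m0.
    by rewrite /share leqNgt iNm /=; exact: dvd_mod_sub.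
  - rewrite /rest big_seq; apply: rpred_sum => j jR.
    have jL : j \in L by move: jR; rewrite (mem_rem_uniq i uL) inE => /andP [].
    have ji : j != i by move: jR; rewrite (mem_rem_uniq i uL) inE => /andP [].
    have [_ _ jN] := Lin j jL.
    apply: dvdz_mulr; apply: dvdz_mull.
    rewrite dvdzE /= MP; apply: Mi_dvd => //; first by rewrite eq_sym.
    exact: pos.
have YM : ((\prod_(i <- L) mm i)%N%:Z %| Y - y l)%Z.
  rewrite /Y /Yrec -/S MP.
  have -> : (S %% (\prod_(i <- L) mm i)%N%:Z)%Z - y l
     = ((S %% (\prod_(i <- L) mm i)%N%:Z)%Z - S) + (S - y l) by ring.
  apply: rpredD; first exact: dvd_mod_sub.
  apply: crt_prod => //.
have YE : Y = y l.
  have Ysm : Y = (Y %% (\prod_(i <- L) mm i)%N%:Z)%Z.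
    by rewrite /Y /Yrec MP modz_mod.
  rewrite Ysm; move: YM; rewrite -eqz_mod_dvd => /eqP ->.
  by rewrite modz_small // y0 ylt.
split => //; rewrite YE /y /yval addrC modzMDl modz_small //.
Qed.
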